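(* Let $R$ be a ring with unity, let $a,b,c,d\in R$ with $a$ and $d$ both left $(b,c)$-invertible. Let $x$ be any left $(b,c)$-inverse of $a$ and $y$ any left $(b,c)$-inverse of $d$. Then (1) $ydx$ is a left $(b,c)$-inverse of $a$; (2) $xay$ is a left $(b,c)$-inverse of $d$.
   Context: For $u,b,c\in R$, $u$ is left $(b,c)$-invertible if there exists $x\in Rc$ with $xub=b$; any such $x$ is a left $(b,c)$-inverse of $u$, denoted $u_l^{(b,c)}$ (not necessarily unique). *)

(* Defs.v *)
From mathcomp Require Import all_boot all_algebra.
Set Implicit Arguments. Unset Strict Implicit. Unset Printing Implicit Defensive.
Import GRing.Theory.
Local Open Scope ring_scope.

Definition left_bc_inverse (R : pzRingType) (b c u x : R) : Prop :=
  (exists r : R, x = r * c) /\ x * u * b = b.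

Definition left_bc_invertible (R : pzRingType) (b c u : R) : Prop :=
  exists x : R, left_bc_inverse b c u x.

(* Main.v *)
Require Import Defs.
From mathcomp Require Import all_boot all_algebra.
Local Open Scope ring_scope.
Import GRing.Theory.

Theorem theorem3p17 (R : pzRingType) (a b c d x y : R) :
  left_bc_invertible b c a -> left_bc_invertible b c d ->
  left_bc_inverse b c a x -> left_bc_inverse b c d y ->
  left_bc_inverse b c a (y * d * x) /\ left_bc_inverse b c d (x * a * y).
Proof.
move=> _ _ [[r ->] Hx] [[s ->] Hy]; split; split.
- by exists (s * c * d * r); rewrite !mulrA.
- have -> : s * c * d * (r * c) * a * b = s * c * d * (r * c * a * b) by rewrite !mulrA.
  by rewrite Hx.
- by exists (r * c * a * s); rewrite !mulrA.
- have -> : r * c * a * (s * c) * d * b = r * c * a * (s * c * d * b) by rewrite !mulrA.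
  by rewrite Hy.
Qed.
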